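(* For every integer $m\ge0$ and every $n\ge1$, $$v_n\!\left(1,m,\tfrac1q,q\right)=q^{\binom n2}\,\frac{[2m+n-1]\,[2m+n-2]\cdots[2m+1]}{[2m+2n-2]\,[2m+2n-4]\cdots[2m+2]},$$ where numerator and denominator each have $n-1$ factors (empty products equal $1$).
   Context: $q$ is an indeterminate; $[n]=\frac{1-q^n}{1-q}$, $[n]!=[1]\cdots[n]$, $[0]!=1$, $(a;q)_n=(1-a)(1-qa)\cdots(1-q^{n-1}a)$, $(a;q)_0=1$. For an integer $m\ge 0$ and indeterminates $x,s$, $$v_n(x,m,s,q)=\sum_{k=0}^{\lfloor n/2\rfloor}(-s)^kq^{k^2}\frac{[n]!}{[k]!\,[n-2k]!}\,\frac{[m+n-k-1]!}{[m+n-1]!}\,\frac{1}{(-q;q)_k\,(-q^{n+m-k};q)_k}\,x^{n-2k}\quad(n\ge1),\qquad v_0=1.$$ *)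

(* Defs.v *)
From HB Require Import structures.
From mathcomp Require Import all_boot all_order all_algebra.
Set Implicit Arguments. Unset Strict Implicit. Unset Printing Implicit Defensive.
Import Order.TTheory GRing.Theory Num.Theory.
Local Open Scope ring_scope.

Section QDefs.
Variable F : fieldType.
Variable q : F.

Definition qint (n : nat) : F := (1 - q ^+ n) / (1 - q).
Definition qfact (n : nat) : F := \prod_(i < n) qint i.+1.
Definition qpoch (a : F) (n : nat) : F := \prod_(i < n) (1 - q ^+ i * a).

Definition v (x : F) (m : nat) (s : F) (n : nat) : F :=
  if n is 0 then 1 else
  \sum_(k < (n %/ 2).+1)
     (- s) ^+ k * q ^+ (k ^ 2)
     * (qfact n / (qfact k * qfact (n - 2 * k)))
     * (qfact (m + n - k - 1) / qfact (m + n - 1))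
     / (qpoch (- q) k * qpoch (- q ^+ (n + m - k)) k)
     * x ^+ (n - 2 * k).
End QDefs.

Definition qX : {fraction {poly rat}} := tofrac ('X : {poly rat}).

(* Main.v *)
Require Import Defs.
From HB Require Import structures.
From mathcomp Require Import all_boot all_order all_algebra.
From mathcomp Require Import ring zify.
Import GRing.Theory.
Local Open Scope ring_scope.

Section Gen.
Variable F : fieldType.
Variable q : F.
Hypothesis q0 : q != 0.
Hypothesis qj : forall j, (0 < j)%N -> q ^+ j != 1.

Lemma om0 j : (0 < j)%N -> 1 - q ^+ j != 0.
Proof. by move=> /qj; rewrite subr_eq0 eq_sym. Qed.

Lemma q1 : 1 - q != 0.
Proof. by have := @om0 1 isT; rewrite expr1. Qed.

Definition NN (a j : nat) : F := \prod_(i < j) (1 - q ^+ (a - i)).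
Definition EE (k : nat) : F := \prod_(i < k) (1 - q ^+ (2 * i.+1)).
Definition GG (b k : nat) : F := \prod_(i < k) (1 - q ^+ (2 * (b - k + i))).
Definition sg (k : nat) : F := (-1) ^+ k * q ^+ (k * k - k).
Definition FF (m n k : nat) : F := sg k * NN n (2 * k) / (EE k * GG (n + m) k).
Definition cc (n k : nat) : F := (1 - q ^+ (2 * k)) / (1 - q ^+ n.+1).
Definition rho (m n : nat) : F := q ^+ n * (qint q (2 * m + n) / qint q (2 * m + 2 * n)).

Lemma NN_recl a j : NN a.+1 j.+1 = (1 - q ^+ a.+1) * NN a j.
Proof. by rewrite /NN big_ord_recl subn0. Qed.

Lemma NN_recr a j : NN a j.+1 = NN a j * (1 - q ^+ (a - j)).
Proof. by rewrite /NN big_ord_recr. Qed.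

Lemma NN0 a : NN a 0 = 1.
Proof. by rewrite /NN big_ord0. Qed.

Lemma NN_zero a j : (a < j)%N -> NN a j = 0.
Proof.
elim: j => // j IH; rewrite ltnS leq_eqVlt NN_recr => /orP[/eqP ->|/IH ->].
  by rewrite subnn expr0 subrr mulr0.
by rewrite mul0r.
Qed.

Lemma EE_S k : EE k.+1 = EE k * (1 - q ^+ (2 * k.+1)).
Proof. by rewrite /EE big_ord_recr. Qed.

Lemma EE_neq0 k : EE k != 0.
Proof. by apply/prodf_neq0 => i _; apply: om0; lia. Qed.

Lemma GG_neq0 b k : (k < b)%N -> GG b k != 0.
Proof. by move=> kb; apply/prodf_neq0 => i _; apply: om0; lia. Qed.

Lemma GG_S b k : (k <= b)%N -> GG b.+1 k.+1 = (1 - q ^+ (2 * (b - k))) * GG b.+1 k.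
Proof.
move=> kb; rewrite /GG big_ord_recl /= subSS addn0; congr (_ * _).
by apply: eq_bigr => i _; congr (1 - q ^+ _); rewrite /bump /=; lia.
Qed.

Lemma GG_shift b k : (k <= b)%N ->
  GG b.+1 k * (1 - q ^+ (2 * (b - k))) = GG b k * (1 - q ^+ (2 * b)).
Proof.
move=> kb; rewrite mulrC -GG_S // /GG big_ord_recr /= subSS.
by rewrite subnK.
Qed.


Lemma sgS k : sg k.+1 = - sg k * q ^+ (2 * k).
Proof.
rewrite /sg exprS (_ : (k.+1 * k.+1 - k.+1 = (k * k - k) + 2 * k)%N); last by nia.
by rewrite exprD; ring.
Qed.

Lemma powE {a b : nat} : a = b -> q ^+ a = q ^+ b.
Proof. by move=> ->. Qed.

Lemma step0 m n : (1 <= n)%N ->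
  FF m n.+1 0 * (1 - cc n 0) + cc n 1 * FF m n.+1 1 = rho m n * FF m n 0.
Proof.
move=> n1.
have h1 := @om0 n.+1 (ltn0Sn n).
have h2 : 1 - q ^+ 2 != 0 by apply: om0.
have h3 : 1 - (q ^+ n) ^+ 2 * (q ^+ m) ^+ 2 != 0.
  by rewrite -!exprM -exprD; apply: om0; lia.
have h4 : 1 - (q ^+ m) ^+ 2 * (q ^+ n) ^+ 2 != 0.
  by rewrite mulrC.
have hq := q1.
rewrite /FF /cc /rho /qint.
rewrite /sg !NN0 /EE /GG !big_ord0 (_ : (2 * 1 = 2)%N) // NN_recl NN_recr NN0 subn0.
rewrite big_ord1 big_ord1 /= muln0 expr0 subrr.
rewrite (powE (_ : (2 * (n.+1 + m - 1 + 0) = n * 2 + m * 2)%N)); last lia.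
rewrite (powE (_ : (2 * m + n = m * 2 + n)%N)); last lia.
rewrite (powE (_ : (2 * m + 2 * n = m * 2 + n * 2)%N)); last lia.
rewrite !exprD !exprM.
rewrite /= subn0 !expr1 !expr0.
field.
by rewrite oner_neq0 hq exprMn h4 h2 h1.
Qed.


Lemma stepM m n j : (1 <= n)%N -> (2 * j.+1 <= n)%N ->
  FF m n.+1 j.+1 * (1 - cc n j.+1) + cc n j.+2 * FF m n.+1 j.+2 = rho m n * FF m n j.+1.
Proof.
move=> n1 jn.
have [t tdef] : exists t, n = (2 * j.+1 + t)%N by exists (n - 2 * j.+1)%N; lia.
set W := NN n (2 * j + 1).
have e1 : NN n.+1 (2 * j.+1) = (1 - q ^+ n.+1) * W.
  by rewrite (_ : (2 * j.+1 = (2 * j + 1).+1)%N) ?NN_recl //; lia.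
have e2 : NN n (2 * j.+1) = W * (1 - q ^+ t.+1).
  rewrite (_ : (2 * j.+1 = (2 * j + 1).+1)%N) ?NN_recr; last lia.
  by rewrite (powE (_ : (n - (2 * j + 1) = t.+1)%N)) //; lia.
have e3 : NN n.+1 (2 * j.+2) = (1 - q ^+ n.+1) * W * (1 - q ^+ t.+1) * (1 - q ^+ t).
  rewrite (_ : (2 * j.+2 = (2 * j.+1).+2)%N); last lia.
  rewrite (NN_recr n.+1 (2 * j.+1).+1) (NN_recr n.+1 (2 * j.+1)) e1.
  rewrite (powE (_ : (n.+1 - 2 * j.+1 = t.+1)%N)); last lia.
  by rewrite (powE (_ : (n.+1 - (2 * j.+1).+1 = t)%N)) //; lia.
have jb : (j.+1 <= n + m)%N by lia.
have hG1 : GG (n + m).+1 j.+1 =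
    GG (n + m) j.+1 * (1 - q ^+ (2 * (n + m))) / (1 - q ^+ (2 * (n + m - j.+1))).
  have hd : 1 - q ^+ (2 * (n + m - j.+1)) != 0 by apply: om0; lia.
  by rewrite -GG_shift // mulfK.
have hG0 : GG (n + m) j.+1 != 0 by apply: GG_neq0; lia.
have hE : EE j.+1 != 0 by apply: EE_neq0.
rewrite /FF /cc /rho /qint !addSn (GG_S (n + m) j.+1) // hG1 (EE_S j.+1) (sgS j.+1) e1 e2 e3.
have p1 : q ^+ n.+1 = q * (q ^+ j.+1) ^+ 2 * q ^+ t.
  by rewrite -exprM -exprS -exprD; apply: powE; lia.
have p2 : q ^+ (2 * j.+1) = (q ^+ j.+1) ^+ 2.
  by rewrite -exprM; apply: powE; lia.
have p3 : q ^+ (2 * j.+2) = q ^+ 2 * (q ^+ j.+1) ^+ 2.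
  by rewrite -exprM -exprD; apply: powE; lia.
have p4 : q ^+ t.+1 = q * q ^+ t by rewrite exprS.
have p5 : q ^+ (2 * (n + m - j.+1)) = (q ^+ j.+1) ^+ 2 * (q ^+ t) ^+ 2 * (q ^+ m) ^+ 2.
  by rewrite -!exprM -!exprD; apply: powE; lia.
have p6 : q ^+ (2 * (n + m)) = (q ^+ j.+1) ^+ 4 * (q ^+ t) ^+ 2 * (q ^+ m) ^+ 2.
  by rewrite -!exprM -!exprD; apply: powE; lia.
have p7 : q ^+ n = (q ^+ j.+1) ^+ 2 * q ^+ t.
  by rewrite -!exprM -!exprD; apply: powE; lia.
have p8 : q ^+ (2 * m + n) = (q ^+ m) ^+ 2 * (q ^+ j.+1) ^+ 2 * q ^+ t.
  by rewrite -!exprM -!exprD; apply: powE; lia.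
have p9 : q ^+ (2 * m + 2 * n) = (q ^+ m) ^+ 2 * (q ^+ j.+1) ^+ 4 * (q ^+ t) ^+ 2.
  by rewrite -!exprM -!exprD; apply: powE; lia.
have h1 := @om0 n.+1 (ltn0Sn n).
have h2 : 1 - q ^+ (2 * j.+2) != 0 by apply: om0.
have h3 : 1 - q ^+ (2 * (n + m - j.+1)) != 0 by apply: om0; lia.
have h4 : 1 - q ^+ (2 * (n + m)) != 0 by apply: om0; lia.
have h5 : 1 - q ^+ (2 * m + 2 * n) != 0 by apply: om0; lia.
have hq := q1.
rewrite p1 p2 p3 p4 p5 p6 p7 p8 p9 in h1 h2 h3 h4 h5 *.
field.
by rewrite hG0 hE hq h5 !exprMn h3 h2 h1.
Qed.


Lemma step m n k : (1 <= n)%N ->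
  FF m n.+1 k * (1 - cc n k) + cc n k.+1 * FF m n.+1 k.+1 = rho m n * FF m n k.
Proof.
move=> n1; case: k => [|j]; first exact: step0.
case: (ltngtP (2 * j.+1) n.+1) => h.
- by apply: stepM => //; lia.
- have z1 : NN n.+1 (2 * j.+1) = 0 by apply: NN_zero.
  have z2 : NN n.+1 (2 * j.+2) = 0 by apply: NN_zero; lia.
  have z3 : NN n (2 * j.+1) = 0 by apply: NN_zero; lia.
  by rewrite /FF z1 z2 z3 !(mul0r, mulr0, addr0).
- have z2 : NN n.+1 (2 * j.+2) = 0 by apply: NN_zero; lia.
  have z3 : NN n (2 * j.+1) = 0 by apply: NN_zero; lia.
  have hc : cc n j.+1 = 1 by rewrite /cc h divff // om0.
  by rewrite /FF z2 z3 hc subrr !(mul0r, mulr0, addr0).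
Qed.

Definition SS m n := \sum_(k < n.+1) FF m n k.

Lemma SS_step m n : (1 <= n)%N -> SS m n.+1 = rho m n * SS m n.
Proof.
move=> n1; rewrite /SS.
have z : FF m n n.+1 = 0 by rewrite /FF NN_zero ?(mul0r, mulr0) //; lia.
have z2 : FF m n.+1 n.+2 = 0 by rewrite /FF NN_zero ?(mul0r, mulr0) //; lia.
have ext : \sum_(k < n.+1) FF m n k = \sum_(k < n.+2) FF m n k.
  by rewrite [in RHS]big_ord_recr /= z addr0.
rewrite ext mulr_sumr.
under [in RHS]eq_bigr do rewrite -step //.
rewrite [in RHS]big_split /=.
under [X in _ = X + _]eq_bigr do rewrite mulrBr mulr1.
rewrite sumrB.
have tel : \sum_(k < n.+2) cc n k.+1 * FF m n.+1 k.+1 =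
           \sum_(k < n.+2) FF m n.+1 k * cc n k.
  transitivity (\sum_(k < n.+3) FF m n.+1 k * cc n k).
    have c0 : cc n 0 = 0 by rewrite /cc muln0 expr0 subrr mul0r.
    rewrite [in RHS]big_ord_recl /= c0 mulr0 add0r.
    by apply: eq_bigr => i _; rewrite mulrC /bump leq0n add1n.
  by rewrite [in LHS]big_ord_recr /= z2 mul0r addr0.
by rewrite tel subrK.
Qed.

Definition RR m n := q ^+ 'C(n, 2) *
  ((\prod_(1 <= i < n) qint q (2 * m + i)) / (\prod_(1 <= i < n) qint q (2 * m + 2 * i))).

Lemma RR_step m n : (1 <= n)%N -> RR m n.+1 = rho m n * RR m n.
Proof.
move=> n1; rewrite /RR /rho !big_nat_recr //= binS bin1 exprD invfM.
ring.
Qed.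

Lemma SS_RR m n : (1 <= n)%N -> SS m n = RR m n.
Proof.
elim: n => // n IH _.
case: n IH => [_|n IH].
  have z : NN 1 2 = 0 by apply: NN_zero.
  rewrite /SS /RR big_ord_recr big_ord1 /= !big_geq // /FF z /sg NN0 /EE /GG !big_ord0.
  by rewrite /= !expr0 !(mul0r, mulr0, mul1r, invr1, addr0).
by rewrite SS_step // RR_step // IH.
Qed.


Lemma qint_neq0 a : (0 < a)%N -> qint q a != 0.
Proof. by move=> a0; rewrite /qint mulf_neq0 ?invr_eq0 ?om0 ?q1. Qed.

Lemma qfact_neq0 a : qfact q a != 0.
Proof. by apply/prodf_neq0 => i _; apply: qint_neq0. Qed.

Lemma qfactNN a j : qfact q (a + j) * (1 - q) ^+ j = qfact q a * NN (a + j) j.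
Proof.
elim: j => [|j IH]; first by rewrite addn0 expr0 mulr1 NN0 mulr1.
rewrite addnS NN_recl mulrCA -IH /qfact big_ord_recr /= /qint (exprSr (1 - q) j).
have hq := q1.
by field.
Qed.

Lemma prod3 (f g : nat -> F) k :
  \prod_(i < k) f i * \prod_(i < k) g i * (1 - q) ^+ k =
  \prod_(i < k) (f i * g i * (1 - q)).
Proof.
have -> : (1 - q) ^+ k = \prod_(i < k) (1 - q) by rewrite prodr_const card_ord.
by rewrite -!big_split.
Qed.

Lemma hBl k : qfact q k * qpoch q (- q) k * (1 - q) ^+ k = EE k.
Proof.
rewrite /qfact /qpoch (prod3 (fun i => qint q i.+1) (fun i => 1 - q ^+ i * - q)) /EE.
apply: eq_bigr => i _.
rewrite (powE (_ : (2 * i.+1 = i.+1 * 2)%N)); last lia.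
rewrite exprM /qint (exprSr q i).
have hq := q1.
by field.
Qed.

Lemma qfact_shift c k : qfact q (c + k) = qfact q c * \prod_(i < k) qint q (c + i).+1.
Proof.
elim: k => [|k IH]; first by rewrite addn0 big_ord0 mulr1.
by rewrite addnS /qfact big_ord_recr /= -/(qfact q (c + k)) IH big_ord_recr /= mulrA.
Qed.

Lemma hDl b k : (k < b)%N ->
  (\prod_(i < k) qint q (b - k - 1 + i).+1) * qpoch q (- q ^+ (b - k)) k * (1 - q) ^+ k
  = GG b k.
Proof.
move=> kb.
rewrite /qpoch (prod3 (fun i => qint q (b - k - 1 + i).+1) (fun i => 1 - q ^+ i * - q ^+ (b - k))) /GG.
apply: eq_bigr => i _.
rewrite (_ : ((b - k - 1 + i).+1 = b - k + i)%N); last lia.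
rewrite mulrN -exprD (addnC i) /qint mulnC exprM.
have hq := q1.
by field.
Qed.

Lemma term m n k : (1 <= n)%N -> (2 * k <= n)%N ->
  (- q^-1) ^+ k * q ^+ (k ^ 2)
     * (qfact q n / (qfact q k * qfact q (n - 2 * k)))
     * (qfact q (m + n - k - 1) / qfact q (m + n - 1))
     / (qpoch q (- q) k * qpoch q (- q ^+ (n + m - k)) k)
     * 1 ^+ (n - 2 * k) = FF m n k.
Proof.
move=> n1 kn.
have kb : (k < n + m)%N by lia.
have hA := qfactNN (n - 2 * k) (2 * k).
rewrite subnK // in hA.
have hB := hBl k.
have hC := qfact_shift (n + m - k - 1) k.
rewrite (_ : (n + m - k - 1 + k = n + m - 1)%N) in hC; last lia.
have hD := @hDl (n + m) k kb.
rewrite [(m + n)%N]addnC expr1n mulr1.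
have hq := q1.
have hfn := qfact_neq0 (n - 2 * k).
have hfk := qfact_neq0 k.
have hfc := qfact_neq0 (n + m - k - 1).
have hp1 : qpoch q (- q) k != 0.
  by move: (EE_neq0 k); rewrite -hB; apply: contraNneq => ->; rewrite mulr0 mul0r.
have hp2 : qpoch q (- q ^+ (n + m - k)) k != 0.
  by move: (@GG_neq0 (n + m) k kb); rewrite -hD; apply: contraNneq => ->; rewrite mulr0 mul0r.
have hP : \prod_(i < k) qint q (n + m - k - 1 + i).+1 != 0.
  by move: (@GG_neq0 (n + m) k kb); rewrite -hD; apply: contraNneq => ->; rewrite !mul0r.
have hNN : NN n (2 * k) = qfact q n * (1 - q) ^+ (2 * k) / qfact q (n - 2 * k).
  by rewrite hA mulrC mulKf.
have hqk : q ^+ k != 0 by rewrite expf_neq0.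
have hs : (- q^-1) ^+ k * q ^+ (k ^ 2) = sg k.
  rewrite /sg (powE (_ : (k ^ 2 = (k * k - k) + k)%N)); last by nia.
  by rewrite -[- q^-1]mulN1r exprMn exprVn exprD; field.
rewrite hs /FF hNN -hB -hD hC mulnC exprM.
field; rewrite mulnC in hfn; by rewrite expf_neq0 // hfn hfk hfc hp1 hp2 hP.
Qed.

End Gen.

Lemma sum_ext (V : zmodType) (f : nat -> V) a b : (a <= b)%N ->
  (forall k, (a <= k < b)%N -> f k = 0) -> \sum_(k < a) f k = \sum_(k < b) f k.
Proof.
move=> ab h; rewrite -!(big_mkord xpredT) (big_cat_nat (leq0n a) ab) /=.
rewrite [X in _ = _ + X]big1_seq ?addr0 // => k /andP[_].
by rewrite mem_index_iota => /h.
Qed.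

Lemma qX0 : qX != 0.
Proof. by rewrite /qX tofrac_eq0 polyX_eq0. Qed.

Lemma qXj j : (0 < j)%N -> qX ^+ j != 1.
Proof.
move=> j0; rewrite /qX -rmorphXn -(rmorph1 (@tofrac _)) tofrac_eq.
apply/eqP => h; have := congr1 (fun p : {poly rat} => size p) h.
rewrite /= size_polyXn size_poly1; lia.
Qed.

Theorem mainTheorem18 (m n : nat) : (1 <= n)%N ->
  v qX 1 m qX^-1 n =
  qX ^+ 'C(n, 2) *
  ((\prod_(1 <= i < n) qint qX (2 * m + i)) /
   (\prod_(1 <= i < n) qint qX (2 * m + 2 * i))).
Proof.
move=> n1.
have := @SS_RR _ qX qX0 qXj m n n1; rewrite /SS /RR => <-.
case: n n1 => // n _; rewrite /v.
rewrite (eq_bigr (fun k : 'I_(n.+1 %/ 2).+1 => @FF _ qX m n.+1 k)); last first.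
  move=> i _; apply: (@term _ qX qX0 qXj) => //.
  by have := ltn_ord i; lia.
apply: sum_ext; first lia.
move=> k /andP[h1 h2]; rewrite /FF NN_zero ?(mul0r, mulr0) //; lia.
Qed.
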